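(* Consider an $N$-player episodic Markov game in which all agents run the BM-OFTRL algorithm with smooth value updates described in the context. For every $(h,t)\in[H]\times[T]$, \[ \delta_h^t \leq \sum_{j=1}^t \alpha_t^j\, \delta_{h+1}^j + \operatorname{SwapReg}_h^t. \]
   Context: Markov game: $N$ agents $\mathcal{N}=\{1,\dots,N\}$, horizon $H$, finite state space $\mathcal{S}$, finite action sets $\mathcal{A}_i$ ($A_i=|\mathcal A_i|$), joint action space $\mathcal{A}_{\mathrm{all}}=\prod_i\mathcal{A}_i$, rewards $r_{h,i}:\mathcal{S}\times\mathcal{A}_{\mathrm{all}}\to[0,1]$, transitions $P_h(\cdot\mid s,\bm a)$. For a (possibly correlated, non-Markov) policy $\pi$ acting from step $h$, $V^\pi_{h,i}(s)$ is the expected sum of agent $i$'s rewards from step $h$ to $H$ given $s_h=s$; all values at step $H+1$ are $0$. Notation: $[Q\pi_{h,-i}](s,a_i)=\sum_{\bm a_{-i}}Q(s,a_i,\bm a_{-i})\prod_{k\ne i}\pi_{h,k}(s,a_k)$, $[Q\pi_h](s)=\sum_{\bm a}Q(s,\bm a)\prod_k\pi_{h,k}(s,a_k)$, $P_h[V](s,\bm a)=\mathbb E_{s'\sim P_h(\cdot\mid s,\bm a)}V(s')$. Weights: $\alpha_t=\frac{H+1}{H+t}$, $\alpha_t^j=\alpha_j\prod_{j'=j+1}^t(1-\alpha_{j'})$ ($1\le j\le t$); at iteration $t$, $w_j=\alpha_t^j/\alpha_t^1$. Algorithm (agent $i$; all agents run it), learning rate $\eta>0$, log-barrier $\mathcal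 R(\bm x)=-\sum_a\log\bm x[a]$. Initialize $Q^0_{h,i}\equiv0$, $\pi^0_{h,i}(s,\cdot)$ uniform, $Q^t_{H+1,i}\equiv0$. For $t=1,\dots,T$: for all $s,h$, $a_i$: $\ell^{t,a_i}_{h,i}(s,a_i')=\sum_{j=1}^{t-1}w_j\pi^j_{h,i}(s,a_i)[Q^j_{h,i}\pi^j_{h,-i}](s,a_i')+w_t\pi^{t-1}_{h,i}(s,a_i)[Q^{t-1}_{h,i}\pi^{t-1}_{h,-i}](s,a_i')$, $q^{t,a_i}_{h,i}(s,\cdot)=\arg\max_{\bm x\in\Delta(\mathcal A_i)}\{\langle\bm x,\eta\ell^{t,a_i}_{h,i}(s,\cdot)/w_t\rangle-\mathcal R(\bm x)\}$, and $\pi^t_{h,i}(s,\cdot)$ is a distribution with $\pi^t_{h,i}(s,\cdot)=\sum_{a_i}\pi^t_{h,i}(s,a_i)q^{t,a_i}_{h,i}(s,\cdot)$. Then for $h=H,\dots,1$: $Q^t_{h,i}(s,\bm a)=(1-\alpha_t)Q^{t-1}_{h,i}(s,\bm a)+\alpha_t\big(r_{h,i}(s,\bm a)+P_h[\,[Q^t_{h+1,i}\pi^t_{h+1}]\,](s,\bm a)\big)$. Correlated policy $\bar\pi^t_h$ (acting from step $h$): for $h'=h,\dots,H$, sample $\tau\in[t]$ with $\mathbb P(\tau=j)=\alpha^j_t$ (shared randomness), all agents play the product policy $\pi^\tau_{h'}$ at step $h'$, set $t\leftarrow\tau$. Strategy modification for agent $i$ effective from step $h$: $\phi_i=\{\phi^s_{h',i}:\mathcal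 A_i\to\mathcal A_i\}_{h'\ge h,s}$; $\phi_i\diamond\pi$ replaces agent $i$'s recommended action $a_i$ at step $h'$, state $s$ by $\phi^s_{h',i}(a_i)$. Definitions: $\delta_h^t=\max_{i\in\mathcal N}\max_{\phi_i}\max_{s\in\mathcal S}\big(V^{\phi_i\diamond\bar\pi^t_h}_{h,i}(s)-V^{\bar\pi^t_h}_{h,i}(s)\big)$, with $\delta^t_{H+1}=0$; $\operatorname{SwapReg}^t_{h,i}(s)=\max_{\phi^s_{h,i}:\mathcal A_i\to\mathcal A_i}\sum_{j=1}^t\alpha^j_t\langle\phi^s_{h,i}\diamond\pi^j_{h,i}(s,\cdot)-\pi^j_{h,i}(s,\cdot),[Q^j_{h,i}\pi^j_{h,-i}](s,\cdot)\rangle$, where $\phi\diamond\bm x$ is the distribution of $\phi(a)$ for $a\sim\bm x$; $\operatorname{SwapReg}^t_h=\max_i\max_s\operatorname{SwapReg}^t_{h,i}(s)$. *)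

(* Defs.v *)
From HB Require Import structures.
From mathcomp Require Import all_boot all_order all_algebra.
From mathcomp Require Import reals exp.
Unset Printing Implicit Defensive.
Import Order.TTheory GRing.Theory Num.Theory.
Local Open Scope ring_scope.

(* Conventions: agents are 'I_N, agent i has action set (A i : finType),
   states form S : finType, steps h are natural numbers (meaningful range
   1..H, value at H+1 is 0), iterations t are natural numbers (0 = init).
   Types of the objects:
     r  : nat -> 'I_N -> S -> jact -> R                 r h i s a = r_{h,i}(s,a)
     P  : nat -> S -> jact -> S -> R                    P h s a s' = P_h(s'|s,a)
     pi : nat -> nat -> forall i, S -> A i -> R         pi t h i s a = pi^t_{h,i}(s,a)
     Q  : nat -> nat -> 'I_N -> S -> jact -> R          Q t h i s a = Q^t_{h,i}(s,a)
     q  : nat -> nat -> forall i, S -> A i -> A i -> R  q t h i s ai a' = q^{t,ai}_{h,i}(s,a') *)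

Section MarkovGame.
Context {R : realType}.

Definition alpha (H t : nat) : R := (H.+1)%:R / (H + t)%:R.
Definition alphaw (H t j : nat) : R :=
  alpha H j * \prod_(j.+1 <= j' < t.+1) (1 - alpha H j').
Definition wt (H t j : nat) : R := alphaw H t j / alphaw H t 1.

Context {N : nat} (A : 'I_N -> finType) (S : finType).

Definition jact := {dffun forall i : 'I_N, A i}.

Section Policies.
Variable pi : nat -> nat -> forall i : 'I_N, S -> A i -> R.

Definition prodpol (t h : nat) (s : S) (a : jact) : R :=
  \prod_(k < N) pi t h k s (a k).
Definition prodpol_mi (t h : nat) (i : 'I_N) (s : S) (a : jact) : R :=
  \prod_(k < N | k != i) pi t h k s (a k).

Variable Q : nat -> nat -> 'I_N -> S -> jact -> R.

(* [Q^t_{h,i} pi^t_{h,-i}](s, ai) : sum over a_{-i}, i.e. over joint actions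
   whose i-th component is ai *)
Definition Qmi (t h : nat) (i : 'I_N) (s : S) (ai : A i) : R :=
  \sum_(a : jact | a i == ai) Q t h i s a * prodpol_mi t h i s a.
Definition Qall (t h : nat) (i : 'I_N) (s : S) : R :=
  \sum_(a : jact) Q t h i s a * prodpol t h s a.

Definition loss (H t h : nat) (i : 'I_N) (s : S) (ai a' : A i) : R :=
  \sum_(1 <= j < t) wt H t j * pi j h i s ai * Qmi j h i s a'
  + wt H t t * pi t.-1 h i s ai * Qmi t.-1 h i s a'.

(* FTRL objective  <x, eta * l / w_t> - R(x),  R(x) = - sum_a log x[a]
   (only evaluated on the interior of the simplex, where it is finite) *)
Definition ftrl_obj (H : nat) (eta : R) (t h : nat) (i : 'I_N) (s : S)
    (ai : A i) (x : A i -> R) : R :=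
  \sum_(a : A i) x a * (eta * loss H t h i s ai a / wt H t t)
  + \sum_(a : A i) ln (x a).

Variables (r : nat -> 'I_N -> S -> jact -> R) (P : nat -> S -> jact -> S -> R).

Record bm_oftrl_run (H T : nat) (eta : R)
    (q : nat -> nat -> forall i : 'I_N, S -> A i -> A i -> R) : Prop := {
  run_Q0 : forall h i s a, Q 0 h i s a = 0;
  run_pi0 : forall h i s (a : A i), pi 0 h i s a = (#|A i|%:R)^-1;
  run_QH1 : forall t i s a, Q t H.+1 i s a = 0;
  (* q^{t,ai}_{h,i}(s,.) = argmax_{x in simplex} <x, eta l / w_t> - R(x);
     since -R = -oo on the boundary, the argmax lies in the open simplex *)
  run_q : forall t, (1 <= t <= T)%N -> forall h, (1 <= h <= H)%N ->
    forall i s (ai : A i),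
      [/\ (forall a', 0 < q t h i s ai a'),
          \sum_(a' : A i) q t h i s ai a' = 1 &
          forall x : A i -> R, (forall a', 0 < x a') -> \sum_(a' : A i) x a' = 1 ->
            ftrl_obj H eta t h i s ai x <= ftrl_obj H eta t h i s ai (q t h i s ai)];
  run_pi : forall t, (1 <= t <= T)%N -> forall h, (1 <= h <= H)%N ->
    forall i s,
      [/\ (forall a, 0 <= pi t h i s a),
          \sum_(a : A i) pi t h i s a = 1 &
          forall a', pi t h i s a' = \sum_(ai : A i) pi t h i s ai * q t h i s ai a'];
  run_Q : forall t, (1 <= t <= T)%N -> forall h, (1 <= h <= H)%N ->
    forall i s a,
      Q t h i s a = (1 - alpha H t) * Q t.-1 h i s a
        + alpha H t * (r h i s a + \sum_(s' : S) P h s a s' * Qall t h.+1 i s')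
}.

(* Value (for agent i, from step h with remaining horizon k) of the correlated
   policy bar-pi^t_h in which the recommended joint action a is transformed
   into (act h s a) before being executed.  Unfolding the sampling process:
   sample j in [t] w.p. alpha_t^j, play a ~ prod_k pi^j_{h,k}(s,.), continue
   from step h+1 with index j. *)
Fixpoint cval (H : nat) (act : nat -> S -> jact -> jact) (i : 'I_N)
    (k h t : nat) (s : S) {struct k} : R :=
  match k with
  | 0 => 0
  | k'.+1 =>
    \sum_(1 <= j < t.+1) alphaw H t j *
      \sum_(a : jact) prodpol j h s a *
        (r h i s (act h s a) +
         \sum_(s' : S) P h s (act h s a) s' * cval H act i k' h.+1 j s')
  end.

Definition Vcor (H : nat) (i : 'I_N) (h t : nat) (s : S) : R :=
  cval H (fun _ _ a => a) i (H.+1 - h) h t s.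

(* strategy modifications for agent i: phi^s_{h',i} : A i -> A i for steps
   h' in 0..H (steps below the starting step are irrelevant) *)
Definition smod (H : nat) (i : 'I_N) :=
  {ffun 'I_H.+1 -> {ffun S -> {ffun A i -> A i}}}.

Definition smod_fun (H : nat) (i : 'I_N) (phi : smod H i) : nat -> S -> A i -> A i :=
  fun h s a => if (h < H.+1)%N then phi (inord h) s a else a.

Definition modify (i : 'I_N) (phi : nat -> S -> A i -> A i) :
    nat -> S -> jact -> jact :=
  fun h s a => finfun (dfwith (fun k => a k) (phi h s (a i))).

Definition Vmod (H : nat) (i : 'I_N) (phi : smod H i) (h t : nat) (s : S) : R :=
  cval H (modify i (smod_fun H i phi)) i (H.+1 - h) h t s.

(* delta_h^t = max_i max_phi max_s (V^{phi <> bar-pi} - V^{bar-pi}).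
   Folding Num.max from 0 is harmless: the identity modification gives 0. *)
Definition delta (H h t : nat) : R :=
  \big[Num.max/0]_(i < N) \big[Num.max/0]_(phi : smod H i)
    \big[Num.max/0]_(s : S) (Vmod H i phi h t s - Vcor H i h t s).

Definition pushf (B : finType) (phi : B -> B) (x : B -> R) (b : B) : R :=
  \sum_(a : B | phi a == b) x a.

(* SwapReg^t_{h,i}(s); again the identity map gives 0 *)
Definition swapreg_i (H h t : nat) (i : 'I_N) (s : S) : R :=
  \big[Num.max/0]_(phi : {ffun A i -> A i})
    \sum_(1 <= j < t.+1) alphaw H t j *
      \sum_(a : A i) (pushf (A i) phi (pi j h i s) a - pi j h i s a) * Qmi j h i s a.

Definition swapreg (H h t : nat) : R :=
  \big[Num.max/0]_(i < N) \big[Num.max/0]_(s : S) swapreg_i H h t i s.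

End Policies.
End MarkovGame.

(* Main.v *)
Require Import Defs.
From HB Require Import structures.
From mathcomp Require Import all_boot all_order all_algebra.
From mathcomp Require Import reals exp.
From mathcomp Require Import zify.
Import Order.TTheory GRing.Theory Num.Theory.
Local Open Scope ring_scope.

Section Alpha.
Context {R : realType}.

Lemma alpha_ge0 H t : 0 <= alpha (R:=R) H t.
Proof. by rewrite /alpha divr_ge0 // ler0n. Qed.

Lemma alpha_le1 H t : (1 <= t)%N -> alpha (R:=R) H t <= 1.
Proof.
move=> t1; rewrite /alpha ler_pdivrMr ?mul1r ?ler_nat //; first lia.
by rewrite ltr0n; lia.
Qed.

Lemma alpha1 H : alpha (R:=R) H 1 = 1.
Proof. by rewrite /alpha addn1 divff // pnatr_eq0. Qed.

Lemma alphaw_ge0 H t j : (1 <= j)%N -> 0 <= alphaw (R:=R) H t j.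
Proof.
move=> j1; rewrite /alphaw mulr_ge0 ?alpha_ge0 //.
rewrite big_nat prodr_ge0 // => k /andP[k1 _].
by rewrite subr_ge0 alpha_le1 //; lia.
Qed.

Lemma alphawS H t k : (k <= t)%N ->
  alphaw (R:=R) H t.+1 k = alphaw H t k * (1 - alpha H t.+1).
Proof. by move=> kt; rewrite /alphaw big_nat_recr //= mulrA. Qed.

Lemma alphaw_tt H t : alphaw (R:=R) H t t = alpha H t.
Proof. by rewrite /alphaw big_geq // mulr1. Qed.

Lemma sum_alphaw H t : (1 <= t)%N ->
  \sum_(1 <= j < t.+1) alphaw (R:=R) H t j = 1.
Proof.
elim: t => // t IH _.
case: (posnP t) => [->|t0].
  by rewrite big_nat1 alphaw_tt alpha1.
rewrite big_nat_recr //= alphaw_tt.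
rewrite (eq_big_nat _ _ (F2 := fun j => alphaw H t j * (1 - alpha H t.+1))); last first.
  by move=> j /andP[_ jt]; rewrite alphawS.
by rewrite -big_distrl /= IH // mul1r subrK.
Qed.

End Alpha.

Section Aux.
Context {R : realType} {N : nat} (A : 'I_N -> finType).

Lemma sum_prodE (f : forall k : 'I_N, A k -> R) :
  \sum_(a : jact A) \prod_(k < N) f k (a k) = \prod_(k < N) \sum_(x : A k) f k x.
Proof.
pose g (j : {k : 'I_N & A k}) := f (tag j) (tagged j).
have E k : \sum_(x : A k) f k x = \sum_(j | tagged_with A k j) g j.
  rewrite /g (eq_bigl (fun p => (tag p == k) && true)); last by move=> p; rewrite andbT.
  rewrite -(sig_big_dep (pred1 k) (fun _ _ => true) (fun i x => f i x)) /=.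
  by rewrite big_pred1_eq.
rewrite [RHS](eq_bigr _ (fun k _ => E k)) /=.
rewrite bigA_distr_big_dep [RHS]big_sub.
rewrite [RHS](reindex (@to_family_tagged_with _ A)); last first.
  by apply: onW_bij; apply: to_family_tagged_with_bij.
rewrite [RHS](reindex (@fprod_of_dffun _ A)); last first.
  by apply: onW_bij; apply: fprod_of_dffun_bij.
apply: eq_bigr => a _; apply: eq_bigr => k _.
by rewrite /g /= ffunE.
Qed.

Definition upd (i : 'I_N) (a : jact A) (d : A i) : jact A :=
  finfun (dfwith (fun k => a k) d).

Lemma upd_i i a d : upd i a d i = d.
Proof. by rewrite /upd ffunE dfwith_in. Qed.

Lemma upd_k i a d k : k != i -> upd i a d k = a k.
Proof. by move=> ki; rewrite /upd ffunE dfwith_out // eq_sym. Qed.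

Lemma upd_upd i a d d' : upd i (upd i a d) d' = upd i a d'.
Proof.
apply/ffunP => k; case: (eqVneq k i) => [->|ki]; first by rewrite !upd_i.
by rewrite !upd_k.
Qed.

Lemma upd_id i a : upd i a (a i) = a.
Proof.
apply/ffunP => k; case: (eqVneq k i) => [->|ki]; first by rewrite !upd_i.
by rewrite !upd_k.
Qed.

Lemma sum_upd i (G : jact A -> R) (c d : A i) :
  \sum_(a : jact A | a i == c) G (upd i a d) = \sum_(a : jact A | a i == d) G a.
Proof.
rewrite [RHS](reindex_onto (fun a => upd i a d) (fun a => upd i a c)); last first.
  by move=> a /eqP ad; rewrite upd_upd -ad upd_id.
apply: eq_bigl => a; rewrite upd_i eqxx /= upd_upd.
have -> : (upd i a c == a) = (a i == c); last by [].
case: (eqVneq (a i) c) => [<-|ac]; first by rewrite upd_id eqxx.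
apply/eqP => E; move: ac; rewrite -E upd_i; by move/eqP.
Qed.

Lemma sum_split i (F : jact A -> R) :
  \sum_(a : jact A) F a = \sum_(c : A i) \sum_(a : jact A | a i == c) F a.
Proof. exact: (partition_big (fun a : jact A => a i) predT). Qed.

Lemma pushf_sum (B : finType) (phi : B -> B) (x G : B -> R) :
  \sum_b pushf B phi x b * G b = \sum_c x c * G (phi c).
Proof.
rewrite [RHS](partition_big phi predT) //=; apply: eq_bigr => b _.
rewrite /pushf big_distrl /=; apply: eq_bigr => c /eqP ->. done.
Qed.

End Aux.

Section Pol.
Context {R : realType} {N : nat} (A : 'I_N -> finType) (S : finType).
Variable pi : nat -> nat -> forall i : 'I_N, S -> A i -> R.
Variable Q : nat -> nat -> 'I_N -> S -> jact A -> R.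

Lemma prodpol_split i j h s (a : jact A) :
  prodpol A S pi j h s a = pi j h i s (a i) * prodpol_mi A S pi j h i s a.
Proof. by rewrite /prodpol (bigD1 i). Qed.

Lemma prodpol_mi_upd i j h s (a : jact A) d :
  prodpol_mi A S pi j h i s (upd A i a d) = prodpol_mi A S pi j h i s a.
Proof. by apply: eq_bigr => k ki; rewrite upd_k. Qed.

Lemma sum_prodpol_mod i j h s (phi : A i -> A i) :
  \sum_(a : jact A) prodpol A S pi j h s a * Q j h i s (upd A i a (phi (a i))) =
  \sum_(c : A i) pi j h i s c * Qmi A S pi Q j h i s (phi c).
Proof.
rewrite (sum_split A i); apply: eq_bigr => c _.
rewrite /Qmi.
have := sum_upd A i (fun a => Q j h i s a * prodpol_mi A S pi j h i s a) c (phi c).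
rewrite /= => <-; rewrite big_distrr /=.
apply: eq_bigr => a /eqP ac.
rewrite (prodpol_split i) ac prodpol_mi_upd -mulrA; congr (_ * _); exact: mulrC.
Qed.

Lemma sum_prodpol_Q i j h s :
  \sum_(a : jact A) prodpol A S pi j h s a * Q j h i s a =
  \sum_(c : A i) pi j h i s c * Qmi A S pi Q j h i s c.
Proof.
rewrite -(sum_prodpol_mod i j h s id); apply: eq_bigr => a _.
by rewrite upd_id.
Qed.

Lemma sum_prodpol1 j h s : (forall k, \sum_x pi j h k s x = 1) ->
  \sum_(a : jact A) prodpol A S pi j h s a = 1.
Proof. by move=> H1; rewrite /prodpol (sum_prodE A (fun k x => pi j h k s x)) big1. Qed.

Lemma prodpol_ge0 j h s a : (forall k x, 0 <= pi j h k s x) ->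
  0 <= prodpol A S pi j h s a.
Proof. by move=> H0; rewrite /prodpol prodr_ge0. Qed.

End Pol.

Section Run.
Context {R : realType} {N : nat} (A : 'I_N -> finType) (S : finType).
Variables (H T : nat) (eta : R)
    (r : nat -> 'I_N -> S -> jact A -> R)
    (P : nat -> S -> jact A -> S -> R)
    (pi : nat -> nat -> forall i : 'I_N, S -> A i -> R)
    (q : nat -> nat -> forall i : 'I_N, S -> A i -> A i -> R)
    (Q : nat -> nat -> 'I_N -> S -> jact A -> R).
Hypothesis hrun : bm_oftrl_run A S pi Q r P H T eta q.

Lemma Q_decomp t h i s a : (t <= T)%N -> (1 <= h <= H)%N ->
  Q t h i s a = \sum_(1 <= k < t.+1) alphaw H t k *
     (r h i s a + \sum_(s' : S) P h s a s' * Qall A S pi Q k h.+1 i s').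
Proof.
move=> + hH; elim: t => [|t IH] tT.
  by rewrite big_geq // (run_Q0 _ _ _ _ _ _ _ _ _ _ hrun).
rewrite (run_Q _ _ _ _ _ _ _ _ _ _ hrun) /=; [|lia|done].
rewrite IH; last by lia.
rewrite [RHS]big_nat_recr //= alphaw_tt; congr (_ + _).
rewrite big_distrr /=; apply: eq_big_nat => k /andP[_ kt].
by rewrite alphawS // mulrA [_ * alphaw _ _ _]mulrC.
Qed.

Lemma Q_step k h i s a : (1 <= k <= T)%N -> (1 <= h <= H)%N ->
  (forall s', Vcor A S pi r P H i h.+1 k s' =
     \sum_(1 <= m < k.+1) alphaw H k m * Qall A S pi Q m h.+1 i s') ->
  Q k h i s a = r h i s a + \sum_(s' : S) P h s a s' * Vcor A S pi r P H i h.+1 k s'.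
Proof.
move=> kT hH IH.
rewrite Q_decomp //; last by lia.
under [in RHS]eq_bigr do rewrite IH.
rewrite [LHS](eq_bigr _ (fun m _ => mulrDr _ _ _)).
rewrite big_split /= -big_distrl /= sum_alphaw; last by lia.
rewrite mul1r; congr (_ + _).
under [in RHS]eq_bigr do rewrite big_distrr /=.
rewrite [RHS]exchange_big /=; apply: eq_big_nat => m _.
rewrite big_distrr /=; apply: eq_bigr => s' _.
by rewrite mulrCA.
Qed.

Lemma Vcor_decomp n : forall h, (H.+1 - h)%N = n -> (1 <= h <= H.+1)%N ->
  forall j, (1 <= j <= T)%N -> forall i s,
  Vcor A S pi r P H i h j s = \sum_(1 <= k < j.+1) alphaw H j k * Qall A S pi Q k h i s.
Proof.
elim: n => [|n IH] h hn hH j jT i s.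
  have -> : h = H.+1 by lia.
  rewrite /Vcor subnn /= big1_seq // => k _.
  rewrite /Qall big1 ?mulr0 // => a _.
  by rewrite (run_QH1 _ _ _ _ _ _ _ _ _ _ hrun) mul0r.
rewrite /Vcor hn /=.
have Hn1 : (H.+1 - h.+1)%N = n by lia.
apply: eq_big_nat => k /andP[k1 kj]; congr (_ * _).
rewrite /Qall; apply: eq_bigr => a _; rewrite [RHS]mulrC; congr (_ * _).
rewrite (@Q_step k h i s a); [|lia|lia|]; last first.
  by move=> s'; apply: IH => //; lia.
by rewrite /Vcor Hn1.
Qed.

Lemma Q_V k h i s a : (1 <= k <= T)%N -> (1 <= h <= H)%N ->
  Q k h i s a = r h i s a + \sum_(s' : S) P h s a s' * Vcor A S pi r P H i h.+1 k s'.
Proof.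
move=> kT hH; apply: Q_step => // s'.
by apply: (@Vcor_decomp (H.+1 - h.+1)) => //; lia.
Qed.

End Run.

Section Max.
Context {R : realType}.
Lemma bigmax_ge (I : finType) (F : I -> R) x : F x <= \big[Num.max/0]_i F i.
Proof. by rewrite (bigD1 x) //= le_max lexx. Qed.
Lemma bigmax_ge0 (I : finType) (F : I -> R) : 0 <= \big[Num.max/0]_i F i.
Proof. by elim/big_rec: _ => // i y _ Hy; rewrite le_max Hy orbT. Qed.
Lemma bigmax_geW (I : finType) (F : I -> R) x c : c <= F x -> c <= \big[Num.max/0]_i F i.
Proof. by move=> H; apply: (le_trans H (bigmax_ge _ F x)). Qed.
Lemma alg1 (a x d y : R) : a * (x + d) - a * y = a * d + a * (x - y).
Proof. by rewrite mulrDr mulrBr [a * x + _]addrC -addrA. Qed.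
End Max.

Section Main.
Context {R : realType} {N : nat} (A : 'I_N -> finType) (S : finType).
Variables (H T : nat) (eta : R)
    (r : nat -> 'I_N -> S -> jact A -> R)
    (P : nat -> S -> jact A -> S -> R)
    (pi : nat -> nat -> forall i : 'I_N, S -> A i -> R)
    (q : nat -> nat -> forall i : 'I_N, S -> A i -> A i -> R)
    (Q : nat -> nat -> 'I_N -> S -> jact A -> R).
Hypothesis hP : forall h, (1 <= h <= H)%N -> forall s a,
      (forall s', 0 <= P h s a s') /\ \sum_(s' : S) P h s a s' = 1.
Hypothesis hrun : bm_oftrl_run A S pi Q r P H T eta q.

Lemma main_bound h t i (phi : smod A S H i) s : (1 <= h <= H)%N -> (1 <= t <= T)%N ->
  Vmod A S pi r P H i phi h t s - Vcor A S pi r P H i h t s <=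
  \sum_(1 <= j < t.+1) alphaw H t j * delta A S pi r P H h.+1 j + swapreg A S pi Q H h t.
Proof.
move=> hH tT.
set phi0 := phi (inord h) s.
have sm x : smod_fun A S H i phi h s x = phi0 x.
  by rewrite /smod_fun ltnS; case/andP: hH => _ ->.
have Em : Vmod A S pi r P H i phi h t s = \sum_(1 <= j < t.+1) alphaw H t j *
   \sum_(a : jact A) prodpol A S pi j h s a *
     (r h i s (upd A i a (phi0 (a i))) + \sum_(s' : S) P h s (upd A i a (phi0 (a i))) s' *
        Vmod A S pi r P H i phi h.+1 j s').
  rewrite /Vmod subSn; last by lia.
  rewrite /=; apply: eq_big_nat => j _; congr (_ * _); apply: eq_bigr => a _.
  by rewrite /modify sm.
have Ec : Vcor A S pi r P H i h t s = \sum_(1 <= j < t.+1) alphaw H t j *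
   \sum_(c : A i) pi j h i s c * Qmi A S pi Q j h i s c.
  rewrite (@Vcor_decomp R N A S H T eta r P pi q Q hrun _ h (erefl _)); [|lia|lia].
  apply: eq_big_nat => j _; congr (_ * _).
  rewrite -sum_prodpol_Q /Qall; apply: eq_bigr => a _; exact: mulrC.
have Hm : Vmod A S pi r P H i phi h t s <= \sum_(1 <= j < t.+1) alphaw H t j *
   (\sum_(c : A i) pi j h i s c * Qmi A S pi Q j h i s (phi0 c) + delta A S pi r P H h.+1 j).
  rewrite Em; apply: ler_sum_nat => j /andP[j1 jt].
  have jT : (1 <= j <= T)%N by lia.
  have pij k : [/\ forall a, 0 <= pi j h k s a, \sum_a pi j h k s a = 1 & _] :=
    run_pi _ _ _ _ _ _ _ _ _ _ hrun j jT h hH k s.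
  apply: ler_wpM2l; first by apply: alphaw_ge0.
  rewrite -(sum_prodpol_mod A S pi Q i j h s phi0).
  have -> : delta A S pi r P H h.+1 j =
      \sum_(a : jact A) prodpol A S pi j h s a * delta A S pi r P H h.+1 j.
    rewrite -big_distrl /= sum_prodpol1 ?mul1r // => k.
    by case: (pij k).
  rewrite -big_split /=; apply: ler_sum => a _; rewrite -mulrDr.
  apply: ler_wpM2l; first by apply: prodpol_ge0 => k x; case: (pij k).
  rewrite (@Q_V R N A S H T eta r P pi q Q hrun) //.
  have [P0 P1] := hP h hH s (upd A i a (phi0 (a i))).
  rewrite -addrA lerD2l.
  have -> : delta A S pi r P H h.+1 j =
      \sum_(s' : S) P h s (upd A i a (phi0 (a i))) s' * delta A S pi r P H h.+1 j.
    by rewrite -big_distrl /= P1 mul1r.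
  rewrite -big_split /=; apply: ler_sum => s' _; rewrite -mulrDr.
  apply: ler_wpM2l => //.
  rewrite -lerBlDl.
  rewrite /delta.
  apply: (bigmax_geW _ _ i); apply: (bigmax_geW _ _ phi).
  exact: (bigmax_geW _ _ s').
apply: le_trans (lerD Hm (lexx (- Vcor A S pi r P H i h t s))) _.
rewrite Ec -sumrB.
under eq_bigr do rewrite alg1.
rewrite big_split /= lerD2l.
rewrite /swapreg.
apply: (bigmax_geW _ _ i); apply: (bigmax_geW _ _ s).
rewrite /swapreg_i.
apply: (bigmax_geW _ _ phi0).
apply: ler_sum_nat => j /andP[j1 _]; apply: ler_wpM2l; first exact: alphaw_ge0.
under [X in _ <= X]eq_bigr do rewrite mulrBl.
by rewrite sumrB pushf_sum.
Qed.
End Main.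

Section Final.
Context {R : realType}.
Lemma bigmax_le (I : finType) (F : I -> R) c :
  0 <= c -> (forall i, F i <= c) -> \big[Num.max/0]_i F i <= c.
Proof. by move=> c0 Fc; elim/big_rec: _ => // i y _ Hy; rewrite ge_max Fc Hy. Qed.
End Final.

Theorem lemma1 (R : realType) (N : nat) (A : 'I_N -> finType) (S : finType)
    (H T : nat) (eta : R)
    (r : nat -> 'I_N -> S -> jact A -> R)
    (P : nat -> S -> jact A -> S -> R)
    (pi : nat -> nat -> forall i : 'I_N, S -> A i -> R)
    (q : nat -> nat -> forall i : 'I_N, S -> A i -> A i -> R)
    (Q : nat -> nat -> 'I_N -> S -> jact A -> R) :
  (forall i : 'I_N, (0 < #|A i|)%N) ->
  (forall h, (1 <= h <= H)%N -> forall i s a, 0 <= r h i s a <= 1) ->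
  (forall h, (1 <= h <= H)%N -> forall s a,
      (forall s', 0 <= P h s a s') /\ \sum_(s' : S) P h s a s' = 1) ->
  0 < eta ->
  bm_oftrl_run A S pi Q r P H T eta q ->
  forall h t, (1 <= h <= H)%N -> (1 <= t <= T)%N ->
    delta A S pi r P H h t <=
      \sum_(1 <= j < t.+1) alphaw H t j * delta A S pi r P H h.+1 j
      + swapreg A S pi Q H h t.
Proof.
move=> _ _ hP _ hrun h t hH tT.
have c0 : 0 <= \sum_(1 <= j < t.+1) alphaw H t j * delta A S pi r P H h.+1 j
      + swapreg A S pi Q H h t.
  apply: addr_ge0; last exact: bigmax_ge0.
  rewrite big_nat; apply: sumr_ge0 => j /andP[j1 _].
  by apply: mulr_ge0; [exact: alphaw_ge0 | exact: bigmax_ge0].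
rewrite /delta; apply: bigmax_le => // i; apply: bigmax_le => // phi.
apply: bigmax_le => // s.
exact: (@main_bound R N A S H T eta r P pi q Q hP hrun h t i phi s hH tT).
Qed.
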